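(* Let $X$, $M$ be sets with functions $\mathsf{upd}_X : X \to X$ and $\mathsf{upd}_M : M \to M$, and let $\mu : X \to M$ be a surjective function with $\mu \circ \mathsf{upd}_X = \mathsf{upd}_M \circ \mu$. Define the deterministic map $c : X \times M \to M$, $c(y,m) = \mathsf{upd}_M(m)$; the interpretation map $\psi = \mu^{-1} : M \to \mathcal{P}^+(X)$, $\mu^{-1}(m) = \{x \mid \mu(x) = m\}$; and the possibilistic hidden Markov model $\kappa : X \to \mathcal{P}^+(X \times X)$, $\kappa(x) = \{(x', x) \mid x' \in X,\ \mu(x') = \mu(\mathsf{upd}_X(x))\}$ (first component the updated hidden state, second component the observation). Then $(\psi, \kappa)$ is a Bayesian filtering interpretation of $c$ in $\mathbf{Rel}^+$, i.e. the consistency equation holds: for every $m \in M$, $$\{(x',y) \mid \exists x \in \psi(m),\ (x',y) \in \kappa(x)\} = \{(x',y) \mid y \in Y_m,\ x' \in \psi(c(y,m))\},$$ where $Y_m = \{y \mid \exists x \in \psi(m),\ \exists x',\ (x',y) \in \kappa(x)\}$.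
   Context: $\mathcal{P}^+(Y)$ denotes the non-empty subsets of $Y$; $\mathbf{Rel}^+$ is the Markov category of sets and left-total relations $X \to \mathcal{P}^+(Y)$ with relational composition, cartesian product as tensor, copy $x \mapsto \{(x,x)\}$ and delete. Given a deterministic map $c : Y \times \Theta \to \Theta$, a Bayesian filtering interpretation of $c$ is a pair of a morphism $\psi: \Theta \to \mathcal{P}^+(X)$ (interpretation map) and $\kappa : X \to \mathcal{P}^+(X \times Y)$ (hidden Markov model) such that the joint ''distribution'' over (next hidden state, observation) obtained by sampling $x \in \psi(\theta)$ and then $\kappa(x)$ equals the one obtained by sampling the observation $y$ from its marginal and then the next hidden state from $\psi(c(y,\theta))$; in $\mathbf{Rel}^+$ this is the displayed set equality. *)

(* Defs.v *)
(* subsets as predicates  T -> Prop.  Morphisms of Rel+ are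
   relations X -> P^+(Y), i.e. maps into predicates that are nonempty. *)
From Stdlib Require Import Classical FunctionalExtensionality PropExtensionality.

Definition relp (X Y : Type) := X -> Y -> Prop.
Definition left_total {X Y : Type} (f : relp X Y) : Prop :=
  forall x, exists y, f x y.

Definition preim {X M : Type} (mu : X -> M) : relp M X :=
  fun m x => mu x = m.

Definition bayes_filter_interp {X Y Theta : Type}
  (c : Y -> Theta -> Theta) (psi : relp Theta X) (kappa : relp X (X * Y)) : Prop :=
  left_total psi /\ left_total kappa /\
  forall th : Theta,
    (fun p : X * Y => exists x, psi th x /\ kappa x p) =
    (fun p : X * Y =>
       (exists x, psi th x /\ exists x', kappa x (x', snd p)) /\
       psi (c (snd p) th) (fst p)).

(* Main.v *)
Require Import Defs.
From Stdlib Require Import Classical FunctionalExtensionality PropExtensionality.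

Theorem theorem3 (X M : Type) (updX : X -> X) (updM : M -> M) (mu : X -> M)
  (mu_surj : forall m : M, exists x : X, mu x = m)
  (mu_comm : forall x : X, mu (updX x) = updM (mu x)) :
  bayes_filter_interp (X := X) (Y := X) (Theta := M)
    (fun (_ : X) (m : M) => updM m)
    (preim mu)
    (fun (x : X) (p : X * X) => mu (fst p) = mu (updX x) /\ snd p = x).
Proof.
  unfold bayes_filter_interp, left_total, preim.
  split; [exact mu_surj|].
  split; [intro x; exists (updX x, x); simpl; auto|].
  intro th. apply functional_extensionality. intros [x' y]; simpl.
  apply propositional_extensionality. split.
  - intros [x [Hx [H1 H2]]]. subst y. split.
    + exists x. split; [exact Hx|]. exists (updX x). auto.
    + rewrite H1, mu_comm, Hx. reflexivity.
  - intros [[x [Hx [x'' [_ H2]]]] H3]. subst x. exists y. split; [exact Hx|].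
    split; [|reflexivity]. rewrite H3, mu_comm, Hx. reflexivity.
Qed.
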